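(* Let $\rho,p:\mathbb R^3\to\mathbb R$ and $H:\mathbb R^3\to\mathbb R^3$ be smooth with $\rho>0$, let $\gamma$ be a constant, and let $P$ be the $3\times3$ second order operator on $\mathbb R_t\times\mathbb R^3_x$ acting on $\beta(t,x)$ by $P\beta=-\rho\partial_t^2\beta+\gamma\nabla(p\operatorname{div}\beta)+\nabla(\beta\cdot\nabla p)+(\nabla\times(\nabla\times(\beta\times H)))\times H+(\nabla\times H)\times(\nabla\times(\beta\times H))$, with principal symbol $p_2(x;\tau,\xi)=(\rho\tau^2-(H\cdot\xi)^2)\operatorname{Id}_3-(\gamma p+|H|^2)\xi\otimes\xi+(H\cdot\xi)(\xi\otimes H+H\otimes\xi)$. Assume $c^2=\gamma p/\rho>0$, $0<|H|^2\ne\rho c^2$, $\xi\cdot H\ne0$ and $\xi\times H\neq0$. Then the characteristic variety $\{\det p_2=0\}$ of $P$ is the disjoint union of $\{q_1=0\}$, $\{q_2=0\}$, $\{q_3=0\}$, where $q_1=\rho\tau^2-(H\cdot\xi)^2$, $q_2=\rho(\tau^2-c_s^2(x,\xi))$, $q_3=\rho(\tau^2-c_f^2(x,\xi))$ with $c_f^2(x,\xi)=\tfrac12\big((c^2+h^2)|\xi|^2+\sqrt{(c^2-h^2)^2|\xi|^4+4b^2c^2|\xi|^2}\big)$, $c_s^2(x,\xi)=\tfrac12\big((c^2+h^2)|\xi|^2-\sqrt{(c^2-h^2)^2|\xi|^4+4b^2c^2|\xi|^2}\big)$, $h^2=|H|^2/\rho$, $b^2=|\xi\times H|^2/\rho$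.
   Context: $(\tau,\xi)$ are dual to $(t,x)$; principal symbols are taken with the convention $\partial\mapsto i\xi$ (so $\partial_t\mapsto i\tau$). The inequalities $\xi\cdot H\neq0$, $\xi\times H\ne0$ are imposed at the points $(t,x;\tau,\xi)$ considered, with $H=H(x)$. *)

(* Defs.v *)
From HB Require Import structures.
From mathcomp Require Import all_boot all_order all_algebra.
Set Implicit Arguments. Unset Strict Implicit. Unset Printing Implicit Defensive.
Import Order.TTheory GRing.Theory Num.Theory.
Local Open Scope ring_scope.

Definition dotv (R : rcfType) (u v : 'cV[R]_3) : R := (u^T *m v) 0 0.

Definition crossv (R : rcfType) (u v : 'cV[R]_3) : 'cV[R]_3 :=
  \col_(i < 3)
    (if i == 0 :> nat then u 1 0 * v 2%:R 0 - u 2%:R 0 * v 1 0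
     else if i == 1 :> nat then u 2%:R 0 * v 0 0 - u 0 0 * v 2%:R 0
     else u 0 0 * v 1 0 - u 1 0 * v 0 0).

Definition tensv (R : rcfType) (u v : 'cV[R]_3) : 'M[R]_3 := u *m v^T.

(* principal symbol p_2(x;tau,xi) of P, with rho, p, H evaluated at x *)
Definition p2 (R : rcfType) (gamma rho pp : R) (H : 'cV[R]_3) (tau : R)
    (xi : 'cV[R]_3) : 'M[R]_3 :=
  (rho * tau ^+ 2 - (dotv H xi) ^+ 2)%:M
  - (gamma * pp + dotv H H) *: tensv xi xi
  + dotv H xi *: (tensv xi H + tensv H xi).

Definition c2 (R : rcfType) (gamma rho pp : R) : R := gamma * pp / rho.
Definition h2 (R : rcfType) (rho : R) (H : 'cV[R]_3) : R := dotv H H / rho.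
Definition b2 (R : rcfType) (rho : R) (H xi : 'cV[R]_3) : R :=
  dotv (crossv xi H) (crossv xi H) / rho.

Definition disc (R : rcfType) (gamma rho pp : R) (H xi : 'cV[R]_3) : R :=
  Num.sqrt ((c2 gamma rho pp - h2 rho H) ^+ 2 * (dotv xi xi) ^+ 2
            + 4 * b2 rho H xi * c2 gamma rho pp * dotv xi xi).

Definition cf2 (R : rcfType) (gamma rho pp : R) (H xi : 'cV[R]_3) : R :=
  2^-1 * ((c2 gamma rho pp + h2 rho H) * dotv xi xi + disc gamma rho pp H xi).
Definition cs2 (R : rcfType) (gamma rho pp : R) (H xi : 'cV[R]_3) : R :=
  2^-1 * ((c2 gamma rho pp + h2 rho H) * dotv xi xi - disc gamma rho pp H xi).

Definition q1 (R : rcfType) (rho : R) (H : 'cV[R]_3) (tau : R) (xi : 'cV[R]_3) : R :=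
  rho * tau ^+ 2 - (dotv H xi) ^+ 2.
Definition q2 (R : rcfType) (gamma rho pp : R) (H : 'cV[R]_3) (tau : R)
    (xi : 'cV[R]_3) : R :=
  rho * (tau ^+ 2 - cs2 gamma rho pp H xi).
Definition q3 (R : rcfType) (gamma rho pp : R) (H : 'cV[R]_3) (tau : R)
    (xi : 'cV[R]_3) : R :=
  rho * (tau ^+ 2 - cf2 gamma rho pp H xi).

(* Main.v *)
Require Import Defs.
From HB Require Import structures.
From mathcomp Require Import all_boot all_order all_algebra.
From mathcomp Require Import ring lra.
Import Order.TTheory GRing.Theory Num.Theory.
Set Implicit Arguments. Unset Strict Implicit. Unset Printing Implicit Defensive.
Local Open Scope ring_scope.

Lemma det3 (R : comRingType) (A : 'M[R]_3) : \det A =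
  A 0 0 * (A 1 1 * A 2%:R 2%:R - A 1 2%:R * A 2%:R 1)
  - A 0 1 * (A 1 0 * A 2%:R 2%:R - A 1 2%:R * A 2%:R 0)
  + A 0 2%:R * (A 1 0 * A 2%:R 1 - A 1 1 * A 2%:R 0).
Proof.
have -> : A = \matrix_(i<3,j<3) A (inord i) (inord j).
  by apply/matrixP => i j; rewrite mxE !inord_val.
rewrite (expand_det_row _ 0) !big_ord_recl big_ord0 /= /cofactor.
rewrite !(expand_det_row _ 0) !big_ord_recl !big_ord0 /= /cofactor !det_mx11 !mxE /=.
rewrite /bump /=. have E1 : (1 %% 3 = 1)%N by []. have E2 : ((1 + 1) %% 3 = 2)%N by [].
rewrite E1 E2 /= !(addn0, add0n, addn1).
ring.
Qed.

Lemma dotE (R : rcfType) (u v : 'cV[R]_3) :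
  dotv u v = u 0 0 * v 0 0 + u 1 0 * v 1 0 + u 2%:R 0 * v 2%:R 0.
Proof.
rewrite /dotv mxE !big_ord_recl big_ord0 !mxE addr0 addrA.
have e1 : lift ord0 ord0 = 1 :> 'I_3 by apply/val_inj.
have e2 : lift ord0 (lift ord0 ord0) = 2%:R :> 'I_3 by apply/val_inj.
by rewrite e1 e2.
Qed.

Lemma dotC (R : rcfType) (u v : 'cV[R]_3) : dotv u v = dotv v u.
Proof. by rewrite !dotE; ring. Qed.

Lemma crossE (R : rcfType) (u v : 'cV[R]_3) :
  [/\ crossv u v 0 0 = u 1 0 * v 2%:R 0 - u 2%:R 0 * v 1 0,
      crossv u v 1 0 = u 2%:R 0 * v 0 0 - u 0 0 * v 2%:R 0 &
      crossv u v 2%:R 0 = u 0 0 * v 1 0 - u 1 0 * v 0 0].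
Proof. by rewrite !mxE /=. Qed.

Lemma p2E (R : rcfType) g r P (H : 'cV[R]_3) tau xi i j :
  p2 g r P H tau xi i j =
  (r * tau ^+ 2 - (dotv H xi) ^+ 2) * (i == j)%:R
  - (g * P + dotv H H) * (xi i 0 * xi j 0)
  + dotv H xi * (xi i 0 * H j 0 + H i 0 * xi j 0).
Proof. by rewrite /p2 /tensv !mxE !big_ord1 !mxE mulr_natr. Qed.

Lemma dot_gt0 (R : rcfType) (v : 'cV[R]_3) : v != 0 -> 0 < dotv v v.
Proof.
move=> hv; rewrite dotE.
have s0 := sqr_ge0 (v 0 0); have s1 := sqr_ge0 (v 1 0); have s2 := sqr_ge0 (v 2%:R 0).
rewrite !expr2 in s0 s1 s2.
have pos : forall a : R, a != 0 -> 0 < a * a.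
  by move=> a ha; rewrite -expr2 lt0r sqrf_eq0 ha sqr_ge0.
case: (eqVneq (v 0 0) 0) => h0; last by have := pos _ h0; lra.
case: (eqVneq (v 1 0) 0) => h1; last by have := pos _ h1; lra.
case: (eqVneq (v 2%:R 0) 0) => h2; last by have := pos _ h2; lra.
exfalso; move/eqP: hv; apply; apply/matrixP => i j; rewrite ord1 mxE.
case: i => [[|[|[|i]]]] Hi //.
- by rewrite -h0; congr (v _ _); apply/val_inj.
- by rewrite -h1; congr (v _ _); apply/val_inj.
- by rewrite -h2; congr (v _ _); apply/val_inj.
Qed.

Lemma core (R : rcfType) (g r P : R) (h : 'cV[R]_3) (tau : R) (xi : 'cV[R]_3) :
  0 < r -> 0 < c2 g r P -> dotv xi h != 0 -> crossv xi h != 0 ->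
  let a1 := q1 r h tau xi == 0 in
  let a2 := q2 g r P h tau xi == 0 in
  let a3 := q3 g r P h tau xi == 0 in
  ((\det (p2 g r P h tau xi) == 0) = [|| a1, a2 | a3])
  /\ ~~ (a1 && a2) /\ ~~ (a1 && a3) /\ ~~ (a2 && a3).
Proof.
move=> hr hc hk hcr a1 a2 a3.
have r0 : r != 0 by rewrite gt_eqF.
have hxi : xi != 0 by apply: contraNneq hk => ->; apply/eqP; rewrite dotE !mxE; ring.
have hn := dot_gt0 hxi.
have hb := dot_gt0 hcr.
have lag : dotv (crossv xi h) (crossv xi h) = dotv h h * dotv xi xi - dotv h xi ^+ 2.
  by case: (crossE xi h) => e0 e1 e2; rewrite !dotE e0 e1 e2; ring.
set X := (c2 g r P - h2 r h) ^+ 2 * (dotv xi xi) ^+ 2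
            + 4 * b2 r h xi * c2 g r P * dotv xi xi.
have Xpos : 0 < X.
  rewrite /X; apply: ltr_wpDl; first by rewrite mulr_ge0 // sqr_ge0.
  rewrite /b2; apply: mulr_gt0 => //; apply: mulr_gt0 => //.
  by apply: mulr_gt0; rewrite ?ltr0n ?divr_gt0.
have hD : disc g r P h xi ^+ 2 = X by rewrite /disc sqr_sqrtr // ltW.
have key1 : q2 g r P h tau xi * q3 g r P h tau xi =
   r ^+ 2 * tau ^+ 4 - (g * P + dotv h h) * dotv xi xi * r * tau ^+ 2
   + g * P * dotv h xi ^+ 2 * dotv xi xi.
  have -> : q2 g r P h tau xi * q3 g r P h tau xi =
     r ^+ 2 * ((tau ^+ 2 - 2^-1 * ((c2 g r P + h2 r h) * dotv xi xi)) ^+ 2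
               - 4^-1 * disc g r P h xi ^+ 2).
    by rewrite /q2 /q3 /cs2 /cf2; field.
  by rewrite hD /X /b2 /c2 /h2 lag; field.
have key0 : \det (p2 g r P h tau xi) =
   q1 r h tau xi * (q2 g r P h tau xi * q3 g r P h tau xi).
  by rewrite key1 det3 !p2E /q1 /= !dotE; ring.
have H1 : a1 -> q2 g r P h tau xi * q3 g r P h tau xi != 0.
  rewrite /a1 /q1 subr_eq0 => /eqP e.
  have -> : q2 g r P h tau xi * q3 g r P h tau xi =
     - (dotv h xi ^+ 2 * dotv (crossv xi h) (crossv xi h)).
    rewrite key1 lag.
    have -> : r ^+ 2 * tau ^+ 4 = (r * tau ^+ 2) ^+ 2 by ring.
    have -> : (g * P + dotv h h) * dotv xi xi * r * tau ^+ 2 =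
              (g * P + dotv h h) * dotv xi xi * (r * tau ^+ 2) by ring.
    rewrite e; ring.
  rewrite oppr_eq0 mulf_neq0 //; last by rewrite gt_eqF.
  by rewrite sqrf_eq0 dotC.
split; first by rewrite key0 mulf_eq0 [_ * _ == 0]mulf_eq0.
have H23 : ~~ (a2 && a3).
  apply/negP => /andP [e2 e3].
  move: e2 e3; rewrite /a2 /a3 /q2 /q3 !mulf_eq0 (negbTE r0) /= !subr_eq0.
  move=> /eqP e2 /eqP e3.
  have d0 : disc g r P h xi = 0.
    have : cf2 g r P h xi - cs2 g r P h xi = 0 by rewrite -e2 -e3 subrr.
    by rewrite /cf2 /cs2 => E; rewrite -E; field.
  by move: Xpos; rewrite -hD d0 expr0n /= ltxx.
split; last split => //.
  apply/negP => /andP [e1 e2]; move: (H1 e1); rewrite /a2 in e2.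
  by rewrite (eqP e2) mul0r eqxx.
apply/negP => /andP [e1 e3]; move: (H1 e1); rewrite /a3 in e3.
by rewrite (eqP e3) mulr0 eqxx.
Qed.

Theorem lemma5p1 (R : rcfType) (rho p : 'cV[R]_3 -> R) (H : 'cV[R]_3 -> 'cV[R]_3)
    (gamma : R) (t : R) (x : 'cV[R]_3) (tau : R) (xi : 'cV[R]_3) :
  0 < rho x ->
  0 < c2 gamma (rho x) (p x) ->
  0 < dotv (H x) (H x) ->
  dotv (H x) (H x) != rho x * c2 gamma (rho x) (p x) ->
  dotv xi (H x) != 0 ->
  crossv xi (H x) != 0 ->
  let a1 := q1 (rho x) (H x) tau xi == 0 in
  let a2 := q2 gamma (rho x) (p x) (H x) tau xi == 0 in
  let a3 := q3 gamma (rho x) (p x) (H x) tau xi == 0 in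
  ((\det (p2 gamma (rho x) (p x) (H x) tau xi) == 0) = [|| a1, a2 | a3])
  /\ ~~ (a1 && a2) /\ ~~ (a1 && a3) /\ ~~ (a2 && a3).
Proof.
move=> hr hc _ _ hk hcr; exact: core.
Qed.
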